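(* Let $\sim$ (for each $N$) be an equivalence relation on $\{1,\dots,N\}^2$ with $(p,q)\sim(q,p)$ satisfying conditions (C1), (C2), (C3). Let $k$ be even and let $\pi$ be a crossing pair-partition of $\{1,\dots,k\}$. Then $$\frac{1}{N^{k/2+1}}\,\#\mathcal E^{(N)}_k(\pi)\xrightarrow{N\to\infty}0.$$
   Context: Conditions on $\sim$ (as $N\to\infty$): (C1) $\max_p\#\{(q,r,s)\in\{1,\dots,N\}^3:(p,q)\sim(r,s)\}=o(N^2)$; (C2) $\max_{p,q,r}\#\{s:(p,q)\sim(r,s)\}\le B<\infty$ with $B$ independent of $N$; (C3) $\#\{(p,q,r)\in\{1,\dots,N\}^3:(p,q)\sim(q,r),\ r\neq p\}=o(N^2)$. A pair-partition of $\{1,\dots,k\}$ is a partition all of whose blocks have exactly two elements; it is crossing if there exist $1\le a<b<c<d\le k$ with $\{a,c\},\{b,d\}\in\pi$. For a partition $\pi$ of $\{1,\dots,k\}$, $\mathcal E^{(N)}_k(\pi)$ is the set of $i=(i_1,\dots,i_k)\in\{1,\dots,N\}^k$ such that, with $i_{k+1}:=i_1$, for all $l,m$: $l,m$ lie in the same block of $\pi$ iff $(i_l,i_{l+1})\sim(i_m,i_{m+1})$. *)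

(* Defs.v *)
From mathcomp Require Import all_boot.
Set Implicit Arguments. Unset Strict Implicit. Unset Printing Implicit Defensive.

(* Indices {1,...,N} are represented by 'I_N = {0,...,N-1}. *)
Definition pair_rel (N : nat) := rel ('I_N * 'I_N).

(* g = o(f) for nonnegative integer sequences with f > 0 eventually:
   g N / f N -> 0, i.e. for every eps = 1/(m+1) > 0, eventually (m+1) g N <= f N. *)
Definition little_o (g f : nat -> nat) : Prop :=
  forall m : nat, exists N0 : nat, forall N : nat, N0 <= N -> m.+1 * g N <= f N.

Definition is_equivalence {T : Type} (r : rel T) : Prop :=
  [/\ reflexive r, symmetric r & transitive r].

Definition C1_count (sim : forall N, pair_rel N) (N : nat) : nat :=
  \max_(p : 'I_N)
     #|[set x : 'I_N * 'I_N * 'I_N | sim N (p, x.1.1) (x.1.2, x.2)]|.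

Definition C2_count (sim : forall N, pair_rel N) (N : nat) (p q r : 'I_N) : nat :=
  #|[set s : 'I_N | sim N (p, q) (r, s)]|.

Definition C3_count (sim : forall N, pair_rel N) (N : nat) : nat :=
  #|[set x : 'I_N * 'I_N * 'I_N | sim N (x.1.1, x.1.2) (x.1.2, x.2) && (x.2 != x.1.1)]|.

Definition pair_partition (k : nat) (P : {set {set 'I_k}}) : Prop :=
  partition P [set: 'I_k] /\ forall B, B \in P -> #|B| = 2.

Definition crossing (k : nat) (P : {set {set 'I_k}}) : Prop :=
  exists a b c d : 'I_k,
    [/\ a < b, b < c, c < d, [set a; c] \in P & [set b; d] \in P].

Definition same_block (k : nat) (P : {set {set 'I_k}}) (l m : 'I_k) : bool :=
  [exists B in P, (l \in B) && (m \in B)].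

(* E_k^(N)(pi): multi-indices i with cyclic convention i_{k+1} = i_1 (ordS) *)
Definition E_set (sim : forall N, pair_rel N) (N k : nat) (P : {set {set 'I_k}})
  : {set {ffun 'I_k -> 'I_N}} :=
  [set i : {ffun 'I_k -> 'I_N} |
     [forall l : 'I_k, forall m : 'I_k,
        same_block P l m == sim N (i l, i (ordS l)) (i m, i (ordS m))]].

(* Main.v *)
Require Import Defs.
From mathcomp Require Import all_boot zify.
Set Implicit Arguments. Unset Strict Implicit. Unset Printing Implicit Defensive.
Lemma card_bigcup_le (I T : finType) (A : {set I}) (F : I -> {set T}) :
  #|\bigcup_(i in A) F i| <= \sum_(i in A) #|F i|.
Proof.
elim/big_rec2: _ => [|i m B _ IH]; first by rewrite cards0.
exact: leq_trans (leq_card_setU _ _).1 (leq_add (leqnn _) IH).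
Qed.

Definition proj k N (D : {set 'I_k}) (f : {ffun 'I_k -> 'I_N}) : {ffun 'I_k -> option 'I_N} :=
  [ffun x => if x \in D then Some (f x) else None].

Lemma step_card k N (S : {set {ffun 'I_k -> 'I_N}}) (D T : {set 'I_k}) M :
 (forall f0, f0 \in S -> #|[set proj T f | f in S & proj D f == proj D f0]| <= M) ->
 #|[set proj (D :|: T) f | f in S]| <= M * #|[set proj D f | f in S]|.
Proof.
move=> H.
set A := [set proj D f | f in S].
pose join (g y : {ffun 'I_k -> option 'I_N}) := [ffun x => if x \in D then g x else y x].
pose Fib (g : {ffun 'I_k -> option 'I_N}) := [set proj T f | f in S & proj D f == g].
have sub : [set proj (D :|: T) f | f in S] \subset \bigcup_(g in A) [set join g y | y in Fib g].
  apply/subsetP => r /imsetP [f fS ->]; apply/bigcupP; exists (proj D f).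
    exact: imset_f.
  apply/imsetP; exists (proj T f).
    by apply: imset_f; rewrite inE fS eqxx.
  by apply/ffunP => x; rewrite !ffunE inE; case: (x \in D).
apply: (leq_trans (subset_leq_card sub)).
apply: (leq_trans (card_bigcup_le _ _)).
rewrite mulnC -sum_nat_const; apply: leq_sum => g /imsetP [f0 f0S ->].
exact: leq_trans (leq_imset_card _ _) (H f0 f0S).
Qed.
Lemma interval_const (p : nat -> bool) x y :
  (forall n, x <= n -> n < y -> p n = p n.+1) ->
  forall n, x <= n -> n <= y -> p n = p x.
Proof.
move=> H n; elim: n => [|n IH] hx hy.
  by have -> : x = 0 by lia.
case: (leqP x n) => h.
  by rewrite -H // IH //; lia.
by have -> : x = n.+1 by lia.
Qed.

Lemma boundary k (D : {set 'I_k}) (a b c d : 'I_k) :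
  a < b -> b < c -> c < d -> a \in D -> c \in D -> D != setT ->
  exists j : 'I_k, [/\ j != b, j != d & (j \in D) != (ordS j \in D)].
Proof.
move=> ab bc cd aD cD DT.
case: (boolP [exists j : 'I_k, [&& j != b, j != d & (j \in D) != (ordS j \in D)]]).
  by move=> /existsP [j /and3P [h1 h2 h3]]; exists j.
move=> /existsPn H; exfalso; move/negP: DT; apply; apply/eqP/setP => z.
rewrite inE.
pose pd n := [exists x : 'I_k, (val x == n) && (x \in D)].
have pdE (x : 'I_k) : pd x = (x \in D).
  apply/existsP/idP => [[y /andP [/eqP /val_inj -> ->]] //|xD].
  by exists x; rewrite eqxx.
have key (n : nat) (hn : n.+1 < k) : n != b -> n != d -> pd n = pd n.+1.
  move=> nb nd.
  have hn' : n < k by lia.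
  have e1 : (Ordinal hn' == b) = false by apply/negP => /eqP e; rewrite -e /= eqxx in nb.
  have e2 : (Ordinal hn' == d) = false by apply/negP => /eqP e; rewrite -e /= eqxx in nd.
  have := H (Ordinal hn'); rewrite e1 e2 /= negbK => /eqP E.
  have -> : n = Ordinal hn' by [].
  rewrite pdE E.
  have -> : n.+1 = ordS (Ordinal hn') by rewrite /= modn_small.
  by rewrite pdE.
have hdk := ltn_ord d.
have kpos : 0 < k by lia.
have lastk : (k.-1 != b) -> (k.-1 != d) -> pd k.-1 = pd 0.
  move=> nb nd.
  have hn' : k.-1 < k by lia.
  have e1 : (Ordinal hn' == b) = false by apply/negP => /eqP e; rewrite -e /= eqxx in nb.
  have e2 : (Ordinal hn' == d) = false by apply/negP => /eqP e; rewrite -e /= eqxx in nd.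
  have := H (Ordinal hn'); rewrite e1 e2 /= negbK => /eqP E.
  have -> : k.-1 = Ordinal hn' by [].
  rewrite pdE E.
  have -> : 0 = ordS (Ordinal hn') by rewrite /= prednK // modnn.
  by rewrite pdE.
have ha : pd a by rewrite pdE.
have hc : pd c by rewrite pdE.
rewrite -pdE.
have zk := ltn_ord z.
have s1 : forall n, 0 <= n -> n <= a -> pd n = pd 0.
  apply: interval_const => n _ hn; apply: key; lia.
have s2 : forall n, a <= n -> n <= b -> pd n = pd a.
  apply: interval_const => n h1 h2; apply: key; lia.
have s3 : forall n, b.+1 <= n -> n <= c -> pd n = pd b.+1.
  apply: interval_const => n h1 h2; apply: key; lia.
have s4 : forall n, c <= n -> n <= d -> pd n = pd c.
  apply: interval_const => n h1 h2; apply: key; lia.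
have p0 : pd 0 by rewrite -(s1 a) //.
have pb1 : pd b.+1 by rewrite -(s3 c) //; lia.
case: (leqP z a) => h1; first by rewrite s1.
case: (leqP z b) => h2; first by rewrite s2 //; lia.
case: (leqP z c) => h3; first by rewrite s3.
case: (leqP z d) => h4; first by rewrite s4 //; lia.
have s5 : forall n, d.+1 <= n -> n <= k.-1 -> pd n = pd d.+1.
  apply: interval_const => n h5 h6; apply: key; lia.
have pk : pd k.-1 by rewrite lastk //; lia.
rewrite s5; [by rewrite -(s5 k.-1) //; lia | lia | lia].
Qed.

Lemma arith1 x y z w n : z + x = w -> 1 + z + y = w -> x <= n.+1 -> y <= n.
Proof. lia. Qed.

Lemma rearr x y z w : x * (y * z * w) = x * w * y * z.
Proof. by rewrite -!mulnA; congr (_ * _); rewrite [w * _]mulnC -mulnA. Qed.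

Section Main.
Local Unset Implicit Arguments.
Variable sim : forall N : nat, pair_rel N.
Hypothesis Hequiv : forall N : nat, is_equivalence (sim N).
Hypothesis Hswap : forall N (p q : 'I_N), sim N (p, q) (q, p).
Variables (N k B : nat).
Hypothesis HC2 : forall p q r : 'I_N, C2_count sim p q r <= B.
Variable P : {set {set 'I_k}}.
Hypothesis HP : pair_partition P.

Let S := E_set sim N P.

Lemma memS f : f \in S -> forall l m,
  same_block P l m = sim N (f l, f (ordS l)) (f m, f (ordS m)).
Proof.
rewrite inE => /forallP H l m.
by have /forallP /(_ m) /eqP := H l.
Qed.

Lemma projE (D : {set 'I_k}) (f g : {ffun 'I_k -> 'I_N}) x : proj D f = proj D g -> x \in D -> f x = g x.
Proof. by move=> /ffunP/(_ x); rewrite !ffunE => + xD; rewrite xD => -[]. Qed.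

Lemma sim_sym (u v : 'I_N * 'I_N) : sim N u v -> sim N v u.
Proof. by case: (Hequiv N) => _ hs _; rewrite hs. Qed.

Lemma sim_trans (u v w : 'I_N * 'I_N) : sim N u v -> sim N v w -> sim N u w.
Proof. by case: (Hequiv N) => _ _ ht; apply: ht. Qed.

Arguments projE {D f g x}.
Arguments memS {f}.
Arguments sim_sym {u v}.
Arguments sim_trans {u v w}.

Definition single t (s : 'I_N) : {ffun 'I_k -> option 'I_N} :=
  [ffun x => if x \in [set t] then Some s else None].

Lemma proj_single t f : proj [set t] f = single t (f t).
Proof. by apply/ffunP => x; rewrite !ffunE inE; case: eqP => // ->. Qed.

Lemma fiberN (D : {set 'I_k}) t f0 :
  #|[set proj [set t] f | f in S & proj D f == proj D f0]| <= N.
Proof.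
apply: (@leq_trans #|single t @: [set: 'I_N]|).
  apply: subset_leq_card; apply/subsetP => r /imsetP [f _ ->].
  by rewrite proj_single; apply: imset_f.
by apply: leq_trans (leq_imset_card _ _) _; rewrite cardsT card_ord.
Qed.

Lemma fiberB (D : {set 'I_k}) t f0 p q r :
  (forall f, f \in S -> proj D f = proj D f0 -> sim N (p, q) (r, f t)) ->
  #|[set proj [set t] f | f in S & proj D f == proj D f0]| <= B.
Proof.
move=> H.
apply: (@leq_trans #|single t @: [set s : 'I_N | sim N (p, q) (r, s)]|).
  apply: subset_leq_card; apply/subsetP => x /imsetP [f].
  rewrite inE => /andP [fS /eqP e] ->.
  by rewrite proj_single; apply: imset_f; rewrite inE H.
exact: leq_trans (leq_imset_card _ _) (HC2 p q r).
Qed.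

Definition hit (U : {set 'I_k}) := [set Q in P | [exists x in U, x \in Q]].

Lemma hit_mono (U U' : {set 'I_k}) : U \subset U' -> #|hit U| <= #|hit U'|.
Proof.
move=> sU; apply: subset_leq_card; apply/subsetP => Q.
rewrite !inE => /andP [-> /existsP [x /andP [xU xQ]]].
by apply/existsP; exists x; rewrite xQ (subsetP sU).
Qed.

Variables (a b c d : 'I_k).
Let Bp := maxn B 1.
Let C := C1_count sim N.

Definition Inv (D U : {set 'I_k}) :=
  [/\ [&& a \in U, c \in U, b \notin U & d \notin U],
      (forall j, j \in U -> (j \in D) && (ordS j \in D)) &
      #|[set proj D f | f in S]| <= C * N ^ #|hit U| * Bp ^ #|D|].

Hypothesis Npos : 0 < N.

Lemma extend (D U : {set 'I_k}) t j :
  Inv D U -> t \notin D -> j != b -> j != d ->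
  j \in t |: D -> ordS j \in t |: D ->
  (forall f0, f0 \in S -> [exists m in U, same_block P j m] ->
     #|[set proj [set t] f | f in S & proj D f == proj D f0]| <= B) ->
  Inv (t |: D) (j |: U).
Proof.
move=> [/and4P [aU cU bU dU] hU hB] tD jb jd j1 j2 hfib.
split.
- rewrite !inE aU cU !orbT /= !negb_or bU dU !andbT.
  by rewrite eq_sym jb eq_sym jd.
- move=> x /setU1P [-> | xU]; first by rewrite j1 j2.
  by have /andP [h1 h2] := hU x xU; rewrite !inE h1 h2 !orbT.
rewrite cardsU1 tD add1n expnS.
have stepc M : (forall f0, f0 \in S ->
     #|[set proj [set t] f | f in S & proj D f == proj D f0]| <= M) ->
   #|[set proj (t |: D) f | f in S]| <= M * #|[set proj D f | f in S]|.
  by move=> HM; rewrite setUC; apply: step_card.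
have Bp1 : 0 < Bp by rewrite /Bp leq_max orbT.
case: (boolP [exists m in U, same_block P j m]) => hm.
- apply: leq_trans (stepc B (fun f0 f0S => hfib f0 f0S hm)) _.
  apply: leq_trans (leq_mul (leq_maxl B 1) hB) _.
  rewrite mulnCA; apply: leq_mul => //; apply: leq_mul => //.
  apply: leq_pexp2l => //; apply: hit_mono; exact: subsetUr.
- apply: leq_trans (stepc N (fun f0 _ => fiberN D t f0)) _.
  apply: leq_trans (leq_mul (leqnn N) hB) _.
  have hh : #|hit U|.+1 <= #|hit (j |: U)|.
    have jcov : j \in cover P by rewrite (cover_partition HP.1) inE.
    set Q := pblock P j.
    have QP : Q \in P by apply: pblock_mem.
    have jQ : j \in Q by rewrite mem_pblock.
    have QnU : Q \notin hit U.
      rewrite inE QP /=; apply/negP => /existsP [x /andP [xU xQ]].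
      move/negP: hm; apply; apply/existsP; exists x; rewrite xU /=.
      by apply/existsP; exists Q; rewrite QP jQ xQ.
    have -> : #|hit U|.+1 = #|Q |: hit U| by rewrite cardsU1 QnU.
    apply: subset_leq_card; apply/subsetP => R /setU1P [-> | RU].
      by rewrite inE QP; apply/existsP; exists j; rewrite !inE eqxx jQ.
    by move: RU; rewrite !inE => /andP [-> /existsP [x /andP [xU xR]]];
       apply/existsP; exists x; rewrite inE xU orbT xR.
  apply: (@leq_trans (C * N ^ #|hit U|.+1 * Bp ^ #|D|)).
    by rewrite expnS; apply: eq_leq; rewrite !mulnA (mulnC N C).
  apply: leq_mul; first by apply: leq_mul => //; apply: leq_pexp2l.
  by rewrite -expnS leq_pexp2l // leqnSn.
Qed.


Lemma fib_fwd (D U : {set 'I_k}) j f0 :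
  (forall j, j \in U -> (j \in D) && (ordS j \in D)) -> j \in D -> f0 \in S ->
  [exists m in U, same_block P j m] ->
  #|[set proj [set ordS j] f | f in S & proj D f == proj D f0]| <= B.
Proof.
move=> hU jD f0S /existsP [m /andP [mU hjm]].
have /andP [mD smD] := hU m mU.
apply: (@fiberB D (ordS j) f0 (f0 m) (f0 (ordS m)) (f0 j)) => f fS e.
apply: sim_sym; rewrite -(projE e jD) -(projE e mD) -(projE e smD).
by rewrite -(memS fS).
Qed.

Lemma fib_bwd (D U : {set 'I_k}) j f0 :
  (forall j, j \in U -> (j \in D) && (ordS j \in D)) -> ordS j \in D -> f0 \in S ->
  [exists m in U, same_block P j m] ->
  #|[set proj [set j] f | f in S & proj D f == proj D f0]| <= B.
Proof.
move=> hU jD f0S /existsP [m /andP [mU hjm]].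
have /andP [mD smD] := hU m mU.
apply: (@fiberB D j f0 (f0 m) (f0 (ordS m)) (f0 (ordS j))) => f fS e.
apply: sim_sym; rewrite -(projE e jD) -(projE e mD) -(projE e smD).
apply: sim_trans (Hswap N _ _) _.
by rewrite -(memS fS).
Qed.

Hypotheses (ab : a < b) (bc : b < c) (cd : c < d).
Hypothesis Hbd : [set b; d] \in P.
Hypothesis Hac : [set a; c] \in P.

Lemma done_bound (U : {set 'I_k}) : Inv setT U -> #|S| <= C * N ^ (#|P| - 1) * Bp ^ k.
Proof.
move=> [/and4P [aU cU bU dU] hU hB].
have inj : injective (proj (k:=k) (N:=N) setT).
  move=> f g e; apply/ffunP => x; exact: projE e (in_setT x).
rewrite -(card_imset S inj).
apply: leq_trans hB _; rewrite cardsT card_ord.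
apply: leq_mul => //; apply: leq_mul => //; apply: leq_pexp2l => //.
have sub : hit U \subset P :\ [set b; d].
  apply/subsetP => Q; rewrite !inE => /andP [QP /existsP [x /andP [xU xQ]]].
  rewrite QP andbT; apply/eqP => eQ; move: xQ; rewrite eQ !inE.
  by case/orP => /eqP ex; [move: bU | move: dU]; rewrite -ex xU.
apply: leq_trans (subset_leq_card sub) _.
by rewrite (cardsD1 [set b; d] P) Hbd add1n subn1.
Qed.

Lemma final_bound n (D U : {set 'I_k}) :
  #|~: D| <= n -> Inv D U -> #|S| <= C * N ^ (#|P| - 1) * Bp ^ k.
Proof.
elim: n D U => [|n IH] D U hn inv.
  have DT : D = setT.
    by apply/setP => x; rewrite inE; apply/negP => /negP xD; move: hn;
       rewrite leqn0 => /eqP/cards0_eq/setP/(_ x); rewrite !inE xD.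
  by rewrite DT in inv; exact: done_bound inv.
case: (eqVneq D setT) => [DT|DT]; first by move: inv; rewrite DT; apply: done_bound.
have inv' := inv; case: inv' => [/and4P [aU cU bU dU] hU hB].
have aD : a \in D by case/andP: (hU a aU).
have cD : c \in D by case/andP: (hU c cU).
have [j [jb jd jx]] := boundary ab bc cd aD cD DT.
have dec t : t \notin D -> #|~: (t |: D)| <= n.
  move=> tD; have h1 := cardsC D; have h2 := cardsC (t |: D).
  rewrite cardsU1 tD /= in h2.
  exact: arith1 h1 h2 hn.
case jD : (j \in D); move: jx; rewrite jD => /= sj.
- have sjD : ordS j \notin D by move: sj; case: (ordS j \in D).
  apply: (IH (ordS j |: D) (j |: U) (dec _ sjD)).
  apply: extend => //; first by rewrite setU1r.
    by rewrite setU11.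
  move=> f0 f0S hm; exact: fib_fwd hU jD f0S hm.
- have sjD : ordS j \in D by move: sj; case: (ordS j \in D).
  have jD' : j \notin D by rewrite jD.
  apply: (IH (j |: D) (j |: U) (dec _ jD')).
  apply: extend => //; first by rewrite setU11.
    by rewrite setU1r.
  move=> f0 f0S hm; exact: fib_bwd hU sjD f0S hm.
Qed.

Lemma proj_a_bound : #|[set proj [set a] f | f in S]| <= N.
Proof.
apply: (@leq_trans #|single a @: [set: 'I_N]|).
  apply: subset_leq_card; apply/subsetP => r /imsetP [f _ ->].
  by rewrite proj_single; apply: imset_f.
by apply: leq_trans (leq_imset_card _ _) _; rewrite cardsT card_ord.
Qed.

Lemma fib_C1 f0 : f0 \in S ->
  #|[set proj [set ordS a; c; ordS c] f | f in S & proj [set a] f == proj [set a] f0]| <= C.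
Proof.
move=> f0S.
set T := [set ordS a; c; ordS c].
pose G (x : 'I_N * 'I_N * 'I_N) : {ffun 'I_k -> option 'I_N} :=
  [ffun y => if y \in T then Some (if y == ordS a then x.1.1 else if y == c then x.1.2 else x.2)
             else None].
apply: (@leq_trans #|G @: [set x : 'I_N * 'I_N * 'I_N | sim N (f0 a, x.1.1) (x.1.2, x.2)]|).
  apply: subset_leq_card; apply/subsetP => r /imsetP [f].
  rewrite inE => /andP [fS /eqP e] ->.
  have -> : proj T f = G (f (ordS a), f c, f (ordS c)).
    apply/ffunP => y; rewrite !ffunE /=.
    case yT: (y \in T) => //; congr Some.
    case: eqP => [-> //|ya]; case: eqP => [-> //|yc].
    by move: yT; rewrite !inE (introF eqP ya) (introF eqP yc) /= => /eqP ->.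
  apply: imset_f; rewrite inE /=.
  rewrite -(projE e (set11 a)) -(memS fS).
  by apply/existsP; exists [set a; c]; rewrite Hac !inE !eqxx orbT.
apply: leq_trans (leq_imset_card _ _) _.
rewrite /C /C1_count.
exact: (@leq_bigmax 'I_N (fun p : 'I_N => #|[set x : 'I_N * 'I_N * 'I_N | sim N (p, x.1.1) (x.1.2, x.2)]|) (f0 a)).
Qed.

Lemma init_inv : Inv [set a; ordS a; c; ordS c] [set a; c].
Proof.
have ne1 : (b == a) = false by apply/negP => /eqP e; move: ab; rewrite e ltnn.
have ne2 : (b == c) = false by apply/negP => /eqP e; move: bc; rewrite e ltnn.
have ne3 : (d == a) = false by apply/negP => /eqP e; move: ab bc cd; rewrite e; lia.
have ne4 : (d == c) = false by apply/negP => /eqP e; move: cd; rewrite e ltnn.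
split.
- by rewrite !inE !eqxx ne1 ne2 ne3 ne4 !orbT.
- by move=> j; rewrite !inE => /orP [] /eqP ->; rewrite !eqxx !orbT.
apply: (@leq_trans (C * N)).
  have -> : [set a; ordS a; c; ordS c] = a |: [set ordS a; c; ordS c].
    by apply/setP => x; rewrite !inE !orbA.
  apply: leq_trans (step_card fib_C1) _.
  by rewrite leq_mul2l proj_a_bound orbT.
rewrite -mulnA leq_mul2l; apply/orP; right.
have Bpos : 0 < Bp ^ #|[set a; ordS a; c; ordS c]| by rewrite expn_gt0 /Bp leq_max orbT.
apply: leq_trans _ (leq_pmulr _ Bpos).
have : 1 <= #|hit [set a; c]|.
  rewrite card_gt0; apply/set0Pn; exists [set a; c]; rewrite inE Hac /=.
  by apply/existsP; exists a; rewrite !inE eqxx.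
by move=> h; rewrite -{1}(expn1 N) leq_pexp2l.
Qed.

Lemma sec_bound : #|S| <= C * N ^ (#|P| - 1) * Bp ^ k.
Proof.
apply: (@final_bound k _ _ _ init_inv).
by apply: leq_trans (max_card _) _; rewrite card_ord.
Qed.

End Main.


Theorem mainTheorem7
  (sim : forall N : nat, pair_rel N)
  (Hequiv : forall N, is_equivalence (sim N))
  (Hswap : forall N (p q : 'I_N), sim N (p, q) (q, p))
  (HC1 : little_o (C1_count sim) (fun N => N ^ 2))
  (HC2 : exists B N0 : nat, forall N, N0 <= N ->
           forall p q r : 'I_N, C2_count sim p q r <= B)
  (HC3 : little_o (C3_count sim) (fun N => N ^ 2))
  (k : nat) (Hk : ~~ odd k)
  (P : {set {set 'I_k}}) (HP : pair_partition P) (Hcross : crossing P) :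
  little_o (fun N => #|E_set sim N P|) (fun N => N ^ (k./2 + 1)).
Proof.
move=> m.
case: HC2 => B [N0 hB].
case: Hcross => a [b [c [d [ab bc cd Hac Hbd]]]].
have hP : k./2 = #|P|.
  have := card_partition HP.1; rewrite cardsT card_ord.
  rewrite (eq_bigr (fun _ => 2)); last by move=> Q QP; rewrite HP.2.
  rewrite sum_nat_const muln2 => hk.
  by have := congr1 half hk; rewrite doubleK.
have hP1 : 0 < #|P| by rewrite card_gt0; apply/set0Pn; exists [set a; c].
have Bpos : 0 < maxn B 1 ^ k by rewrite expn_gt0 leq_max orbT.
case: (HC1 (m.+1 * maxn B 1 ^ k).-1) => N1 h1.
exists (maxn (maxn N0 N1) 1) => N hN.
have [[NN0 NN1] Npos] : (N0 <= N /\ N1 <= N) /\ 0 < N.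
  by move: hN; rewrite !geq_max => /andP [/andP [-> ->] ->].
have bound := @sec_bound sim Hequiv Hswap N k B (hB N NN0) P HP a b c d Npos ab bc cd Hbd Hac.
have := h1 N NN1; rewrite prednK ?muln_gt0 // => hC.
apply: leq_trans (leq_mul (leqnn _) bound) _.
rewrite hP.
set C := C1_count sim N in hC *; set X := maxn B 1 ^ k in hC *.
have -> : m.+1 * (C * N ^ (#|P| - 1) * X) = (m.+1 * X * C) * N ^ (#|P| - 1).
  exact: rearr.
apply: leq_trans (leq_mul hC (leqnn _)) _.
by rewrite -expnD; have -> : 2 + (#|P| - 1) = #|P| + 1 by lia.
Qed.
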